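(* Let $r\in\mathcal R$ be a universal proper distance matrix and let $(\mathcal U_r,\rho_r)$ be the completion of the metric space $(\mathbb N,r)$. Then for any enumeration $u_1,u_2,\dots$ of a countable everywhere dense subset of $\mathcal U_r$, the distance matrix $\{\rho_r(u_i,u_j)\}_{i,j\ge1}$ is a universal distance matrix.
   Context: $\mathcal R$ is the set of infinite real matrices $r=\{r_{i,j}\}_{i,j\ge1}$ with $r_{i,i}=0$, $r_{i,j}\ge0$, $r_{i,j}=r_{j,i}$, $r_{i,k}+r_{k,j}\ge r_{i,j}$; $r$ is proper if $r_{i,j}>0$ for $i\ne j$; $p_n(r)$ is the upper-left $n\times n$ corner. For an $n\times n$ distance matrix $q$, $A(q)=\{a\in\mathbb R^n:|a_i-a_j|\le q_{i,j}\le a_i+a_j\ \forall i,j\}$. A proper $r\in\mathcal R$ is universal if for every $n$, every $a\in A(p_n(r))$ and every $\epsilon>0$ there is $m\in\mathbb N$ with $\max_{1\le i\le n}|r_{i,m}-a_i|<\epsilon$. *)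

(* Defs.v *)
(* concrete reals R. Indices start at 0 instead of 1. *)
From Stdlib Require Import Reals.
Open Scope R_scope.

Definition dist_matrix (r : nat -> nat -> R) : Prop :=
  (forall i, r i i = 0) /\
  (forall i j, 0 <= r i j) /\
  (forall i j, r i j = r j i) /\
  (forall i j k, r i k + r k j >= r i j).

Definition proper (r : nat -> nat -> R) : Prop :=
  forall i j, i <> j -> r i j > 0.

(* a (its first n coordinates a 0 .. a (n-1)) belongs to A(p_n(r)) *)
Definition in_A (n : nat) (r : nat -> nat -> R) (a : nat -> R) : Prop :=
  forall i j, (i < n)%nat -> (j < n)%nat ->
    Rabs (a i - a j) <= r i j /\ r i j <= a i + a j.

Definition universal (r : nat -> nat -> R) : Prop :=
  dist_matrix r /\ proper r /\
  forall (n : nat) (a : nat -> R), in_A n r a ->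
    forall eps : R, eps > 0 ->
      exists m : nat, forall i, (i < n)%nat -> Rabs (r i m - a i) < eps.

Definition is_metric {X : Type} (d : X -> X -> R) : Prop :=
  (forall x y, 0 <= d x y) /\
  (forall x y, d x y = 0 <-> x = y) /\
  (forall x y, d x y = d y x) /\
  (forall x y z, d x z <= d x y + d y z).

Definition cauchy_seq {X : Type} (d : X -> X -> R) (s : nat -> X) : Prop :=
  forall eps, eps > 0 -> exists N, forall p q, (N <= p)%nat -> (N <= q)%nat ->
    d (s p) (s q) < eps.

Definition converges_to {X : Type} (d : X -> X -> R) (s : nat -> X) (l : X) : Prop :=
  forall eps, eps > 0 -> exists N, forall p, (N <= p)%nat -> d (s p) l < eps.

Definition complete_metric {X : Type} (d : X -> X -> R) : Prop :=
  forall s, cauchy_seq d s -> exists l, converges_to d s l.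

Definition dense_range {X : Type} (d : X -> X -> R) (s : nat -> X) : Prop :=
  forall x eps, eps > 0 -> exists i, d x (s i) < eps.

Definition is_completion (r : nat -> nat -> R) {X : Type} (d : X -> X -> R)
  (e : nat -> X) : Prop :=
  is_metric d /\ complete_metric d /\
  (forall i j, d (e i) (e j) = r i j) /\ dense_range d e.

(* Main.v *)
Require Import Defs.
From Stdlib Require Import Reals Lra Lia.
Open Scope R_scope.

Fixpoint Mn (p : nat) (f : nat -> R) : R :=
  match p with O => f O | S q => Rmin (Mn q f) (f (S q)) end.

Lemma Mn_le : forall p f i, (i <= p)%nat -> Mn p f <= f i.
Proof.
  induction p; intros f i Hi; simpl.
  - replace i with O by lia; lra.
  - destruct (Nat.eq_dec i (S p)) as [->|Hne].
    + apply Rmin_r.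
    + eapply Rle_trans; [apply Rmin_l|]. apply IHp; lia.
Qed.

Lemma Mn_att : forall p f, exists i, (i <= p)%nat /\ Mn p f = f i.
Proof.
  induction p; intros f; simpl.
  - exists O; split; [lia|reflexivity].
  - destruct (IHp f) as [i [Hi Ei]].
    destruct (Rle_dec (Mn p f) (f (S p))).
    + exists i; split; [lia|]. rewrite Rmin_left; auto.
    + exists (S p); split; [lia|]. rewrite Rmin_right; lra.
Qed.

Lemma bound_idx : forall (P : nat -> nat -> Prop) n,
  (forall i, (i < n)%nat -> exists k, P i k) ->
  exists N, forall i, (i < n)%nat -> exists k, (k < N)%nat /\ P i k.
Proof.
  induction n; intros H.
  - exists O; intros; lia.
  - destruct IHn as [N HN]. { intros; apply H; lia. }
    destruct (H n ltac:(lia)) as [k Hk].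
    exists (S (N + k)). intros i Hi.
    destruct (Nat.eq_dec i n) as [->|Hne].
    + exists k; split; [lia|auto].
    + destruct (HN i ltac:(lia)) as [k' [Hk' Pk']]. exists k'; split; [lia|auto].
Qed.

Lemma Rabs_lt_both : forall x y, -y < x -> x < y -> Rabs x < y.
Proof. intros. unfold Rabs; destruct Rcase_abs; lra. Qed.

Theorem lemma6 (r : nat -> nat -> R) (Hr : universal r)
  (X : Type) (d : X -> X -> R) (e : nat -> X) (Hcompl : is_completion r d e)
  (u : nat -> X) (Hinj : forall i j, u i = u j -> i = j)
  (Hdense : dense_range d u) :
  universal (fun i j => d (u i) (u j)).
Proof.
  destruct Hr as [_ [_ Hr]].
  destruct Hcompl as [[Hnn [Hz [Hs Ht]]] [_ [He Hde]]].
  split; [|split].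
  - split; [|split; [|split]].
    + intro i; apply Hz; reflexivity.
    + intros; apply Hnn.
    + intros; apply Hs.
    + intros i j k; simpl. pose proof (Ht (u i) (u k) (u j)); lra.
  - intros i j Hij. simpl.
    destruct (Rle_lt_or_eq_dec 0 (d (u i) (u j)) (Hnn _ _)) as [H|H]; [lra|].
    exfalso; apply Hij, Hinj, Hz; auto.
  - intros n a HA eps Heps.
    destruct n as [|p].
    { exists O; intros; lia. }
    set (g := fun j => Mn p (fun i => a i + d (u i) (e j))).
    set (dl := eps / 5).
    assert (Hdl : dl > 0) by (unfold dl; lra).
    assert (HgA : forall N, in_A N r g).
    { intros N j j' _ _. split.
      - assert (forall j j', g j - g j' <= r j j').
        { clear j j'; intros j j'.
          destruct (Mn_att p (fun i => a i + d (u i) (e j'))) as [i [Hi Ei]].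
          assert (g j <= a i + d (u i) (e j)) by (apply (Mn_le p (fun i => a i + d (u i) (e j))); lia).
          unfold g at 2; rewrite Ei.
          pose proof (Ht (u i) (e j') (e j)). rewrite He in H0.
          pose proof (Hs (e j') (e j)) as H1. rewrite !He in H1. lra. }
        pose proof (H j j'); pose proof (H j' j).
        assert (r j' j = r j j') by (rewrite <- !He; apply Hs).
        unfold Rabs; destruct Rcase_abs; lra.
      - destruct (Mn_att p (fun i => a i + d (u i) (e j))) as [i [Hi Ei]].
        destruct (Mn_att p (fun i => a i + d (u i) (e j'))) as [q [Hq Eq]].
        unfold g; rewrite Ei, Eq.
        destruct (HA i q ltac:(lia) ltac:(lia)) as [_ Haq].
        rewrite <- He.
        pose proof (Ht (e j) (u i) (e j')).
        pose proof (Ht (u i) (u q) (e j')).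
        rewrite (Hs (e j) (u i)) in *. lra. }
    destruct (bound_idx (fun i k => d (u i) (e k) < dl) (S p)) as [N HN].
    { intros i _. destruct (Hde (u i) dl Hdl) as [k Hk]. exists k; exact Hk. }
    destruct (Hr N g (HgA N) dl Hdl) as [m Hm].
    destruct (Hdense (e m) dl Hdl) as [M HM].
    exists M. intros i Hi. simpl.
    destruct (HN i Hi) as [k [Hk Hik]].
    pose proof (Hm k Hk) as Hmk.
    assert (Hg1 : g k <= a i + d (u i) (e k))
      by (apply (Mn_le p (fun i => a i + d (u i) (e k))); lia).
    assert (Hg2 : g k >= a i - dl).
    { destruct (Mn_att p (fun i => a i + d (u i) (e k))) as [q [Hq Eq]].
      unfold g; rewrite Eq.
      destruct (HA i q Hi ltac:(lia)) as [Hab _].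
      pose proof (Ht (u q) (e k) (u i)). rewrite (Hs (e k) (u i)) in H.
      rewrite (Hs (u q) (u i)) in H.
      unfold Rabs in Hab; destruct Rcase_abs in Hab; lra. }
    pose proof (Ht (u i) (e m) (u M)).
    pose proof (Ht (u i) (e k) (e m)).
    pose proof (Ht (e k) (u i) (e m)).
    pose proof (Ht (e m) (u i) (u M)).
    pose proof (Ht (u i) (u M) (e m)).
    rewrite He in *.
    rewrite (Hs (e k) (u i)) in *. rewrite (Hs (e m) (u i)) in *.
    rewrite (Hs (u M) (e m)) in *.
    unfold Rabs in Hmk; destruct Rcase_abs in Hmk;
    apply Rabs_lt_both; unfold dl in *; lra.
Qed.
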